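(* Let $x^*$ be a stationary point of $\min_xF(x)=f(x)+\Psi(x)$, i.e. $0\in\nabla f(x^* )+\partial\Psi(x^* )$. Suppose $\Psi$ is partly smooth at $x^*$ relative to a manifold $\mathcal{M}$, with a local $\mathcal{C}^2$ parameterization $\phi$ of $\mathcal{M}$ and a point $y^*$ with $\phi(y^* )=x^*$, and let $F_\phi:=F\circ\phi$. Assume that there is a neighborhood $U$ of $y^*$ such that $V\succeq0$ for every $V\in\partial(\nabla F_\phi)(y)$ and every $y\in U$, and that $\nabla F_\phi$ is strongly semismooth at $y^*$. Fix $c>0$ and $\rho\in(0,1]$. For $y^t\in U$ define $g^t:=\nabla F_\phi(y^t)$, $\mu_t:=c\|g^t\|^{\rho}$, $H_t:=V_t+\mu_tI$ with $V_t\in\partial(\nabla F_\phi)(y^t)$, and $d_t:=\|y^t-y^*\|$. Then for $y^t\in U$, any $q^t$ satisfying $$\|H_tq^t+g^t\|\le0.1\min\{\|g^t\|,\|g^t\|^{1+\rho}\}$$ obeys $$\|q^t\|\le2d_t+\mu_t^{-1}O(d_t^2)+0.1\mu_t^{-1}\|g^t\|^{1+\rho},$$ where $O(\cdot)$ is with respect to $d_t\to0$.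
   Context: Standing setting: $\mathcal{H}$ is a Euclidean space; $f:\mathcal{H}\to\mathbb{R}$ is continuously differentiable with Lipschitz gradient; $\Psi:\mathcal{H}\to(-\infty,\infty]$ is convex, proper, lower semicontinuous. Partial smoothness: $\Psi$ is partly smooth at $x^*$ relative to $\mathcal{M}\ni x^*$ if $\partial\Psi(x^* )\ne\emptyset$ and (i) near $x^*$, $\mathcal{M}$ is a $\mathcal{C}^2$ manifold and $\Psi|_{\mathcal{M}}$ is $\mathcal{C}^2$; (ii) the affine span of $\partial\Psi(x^* )$ is a translate of the normal space to $\mathcal{M}$ at $x^*$; (iii) $\partial\Psi$ is continuous at $x^*$ relative to $\mathcal{M}$; (iv) $\Psi$ is regular at points of $\mathcal{M}$ near $x^*$ with nonempty subdifferential. A local parameterization of a $p$-dimensional $\mathcal{C}^2$ manifold $\mathcal{M}$ around $x^*$ is a $\mathcal{C}^2$ map $\phi:\mathbb{R}^p\to\mathcal{M}$ with $\phi(y^* )=x^*$ and injective derivative at $y^*$, describing a neighborhood of $x^*$ in $\mathcal{M}$. $\partial(\nabla F_\phi)(y)$ is the (Clarke) generalized Jacobian of $\nabla F_\phi$ at $y$ (generalized Hessian of $F_\phi$). $\nabla F_\phi$ is strongly semismooth at $y^*$ if it is directionally differentiable at $y^*$ and for any $V\in\partial(\nabla F_\phi)(y^*+\Delta y)$, as $\Delta y\to0$, $\nabla F_\phi(y^*+\Delta y)-\nabla F_\phi(y^* )-V\Delta y=O(\|\Delta y\|^2)$. *)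

(* Defs.v *)
From HB Require Import structures.
From mathcomp Require Import all_boot all_order all_algebra.
From mathcomp Require Import all_classical all_reals all_analysis.
Set Implicit Arguments. Unset Strict Implicit. Unset Printing Implicit Defensive.
Import Order.TTheory GRing.Theory Num.Theory.
Import numFieldNormedType.Exports.
Local Open Scope classical_set_scope.
Local Open Scope ring_scope.

Definition dotv {R : realType} {n : nat} (u v : 'cV[R]_n) : R :=
  \sum_(i < n) u i 0 * v i 0.
Definition enorm {R : realType} {n : nat} (u : 'cV[R]_n) : R :=
  Num.sqrt (dotv u u).
Definition ebasis {R : realType} {p : nat} (j : 'I_p) : 'cV[R]_p := delta_mx j 0.

Definition partial {R : realType} {p : nat} {W : normedModType R}
  (G : 'cV[R]_p -> W) (j : 'I_p) (y : 'cV[R]_p) : W := derive G y (ebasis j).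

Definition C1_on {R : realType} {p : nat} {W : normedModType R}
  (A : set 'cV[R]_p) (G : 'cV[R]_p -> W) : Prop :=
  open A /\
  forall y, A y -> forall j, derivable G y (ebasis j) /\
                            {for y, continuous (partial G j)}.

Definition C2_on {R : realType} {p : nat} {W : normedModType R}
  (A : set 'cV[R]_p) (G : 'cV[R]_p -> W) : Prop :=
  C1_on A G /\ forall j, C1_on A (partial G j).

Definition grad {R : realType} {p : nat} (F : 'cV[R]_p -> R^o) (y : 'cV[R]_p)
  : 'cV[R]_p := \col_(i < p) partial F i y.

Definition jacobian {R : realType} {p m : nat} (G : 'cV[R]_p -> 'cV[R]_m)
  (y : 'cV[R]_p) : 'M[R]_(m, p) := \matrix_(i < m, j < p) partial G j y i 0.

Definition Bjac {R : realType} {p : nat} (G : 'cV[R]_p -> 'cV[R]_p)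
  (y : 'cV[R]_p) : set 'M[R]_p :=
  [set M | exists yk : nat -> 'cV[R]_p,
      yk @ \oo --> y /\ (forall k, differentiable G (yk k)) /\
      (fun k => jacobian G (yk k)) @ \oo --> M].

Definition convhull {R : realType} {p : nat} (S : set 'M[R]_p) : set 'M[R]_p :=
  [set M | exists (k : nat) (w : 'I_k -> R) (s : 'I_k -> 'M[R]_p),
      (forall i, 0 <= w i) /\ \sum_(i < k) w i = 1 /\ (forall i, S (s i)) /\
      M = \sum_(i < k) w i *: s i].

Definition clarke_jac {R : realType} {p : nat} (G : 'cV[R]_p -> 'cV[R]_p)
  (y : 'cV[R]_p) : set 'M[R]_p := convhull (Bjac G y).

Definition psd {R : realType} {p : nat} (V : 'M[R]_p) : Prop :=
  forall u : 'cV[R]_p, 0 <= dotv u (V *m u).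

Definition strongly_semismooth {R : realType} {p : nat}
  (G : 'cV[R]_p -> 'cV[R]_p) (y : 'cV[R]_p) : Prop :=
  (forall h : 'cV[R]_p,
      cvg ((fun t : R => t^-1 *: (G (y + t *: h) - G y)) @ 0^'+)) /\
  exists C : R, exists2 delta : R, 0 < delta &
    forall dy : 'cV[R]_p, enorm dy < delta ->
      forall V, clarke_jac G (y + dy) V ->
        enorm (G (y + dy) - G y - V *m dy) <= C * enorm dy ^+ 2.

Definition eproper {R : realType} {n : nat} (Psi : 'cV[R]_n -> \bar R) : Prop :=
  (forall x, Psi x != -oo%E) /\ exists x, Psi x \is a fin_num.

Definition econvex {R : realType} {n : nat} (Psi : 'cV[R]_n -> \bar R) : Prop :=
  forall (x y : 'cV[R]_n) (t : R), 0 < t < 1 ->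
    (Psi (t *: x + (1 - t) *: y)%R <= t%:E * Psi x + (1 - t)%:E * Psi y)%E.

(* convex subdifferential (empty outside the domain) *)
Definition subdiff {R : realType} {n : nat} (Psi : 'cV[R]_n -> \bar R)
  (x : 'cV[R]_n) : set 'cV[R]_n :=
  [set v | Psi x \is a fin_num /\
           forall z, (Psi x + (dotv v (z - x)%R)%:E <= Psi z)%E].

Definition frechet_subdiff {R : realType} {n : nat} (Psi : 'cV[R]_n -> \bar R)
  (x : 'cV[R]_n) : set 'cV[R]_n :=
  [set v | Psi x \is a fin_num /\
    forall eps : R, 0 < eps -> exists2 delta : R, 0 < delta &
      forall z, enorm (z - x) < delta ->
        (Psi x + (dotv v (z - x) - eps * enorm (z - x))%R%:E <= Psi z)%E].

Definition limiting_subdiff {R : realType} {n : nat} (Psi : 'cV[R]_n -> \bar R)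
  (x : 'cV[R]_n) : set 'cV[R]_n :=
  [set v | Psi x \is a fin_num /\
    exists (xk vk : nat -> 'cV[R]_n),
      xk @ \oo --> x /\ (fun k => fine (Psi (xk k))) @ \oo --> fine (Psi x) /\
      (forall k, Psi (xk k) \is a fin_num) /\
      (forall k, frechet_subdiff Psi (xk k) (vk k)) /\ vk @ \oo --> v].

Definition horizon_subdiff {R : realType} {n : nat} (Psi : 'cV[R]_n -> \bar R)
  (x : 'cV[R]_n) : set 'cV[R]_n :=
  [set v | Psi x \is a fin_num /\
    exists (xk vk : nat -> 'cV[R]_n) (lk : nat -> R),
      xk @ \oo --> x /\ (fun k => fine (Psi (xk k))) @ \oo --> fine (Psi x) /\
      (forall k, Psi (xk k) \is a fin_num) /\
      (forall k, 0 < lk k) /\ lk @ \oo --> 0 /\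
      (forall k, frechet_subdiff Psi (xk k) (vk k)) /\
      (fun k => lk k *: vk k) @ \oo --> v].

Definition horizon_cone {R : realType} {n : nat} (C : set 'cV[R]_n) : set 'cV[R]_n :=
  [set v : 'cV[R]_n | (C !=set0 /\ v = 0) \/
    exists (ck : nat -> 'cV[R]_n) (lk : nat -> R),
      (forall k, C (ck k)) /\ (forall k, 0 < lk k) /\ lk @ \oo --> 0 /\
      (fun k => lk k *: ck k) @ \oo --> v].

(* subdifferential regularity (Rockafellar-Wets Def. 7.25), through its
   characterization Cor. 8.11 (valid when the subdifferential is nonempty):
   Psi finite and locally lsc at x, limiting = regular subdifferential, and
   horizon subdifferential = horizon cone of the regular subdifferential. *)
Definition sregular {R : realType} {n : nat} (Psi : 'cV[R]_n -> \bar R)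
  (x : 'cV[R]_n) : Prop :=
  Psi x \is a fin_num /\
  (exists2 O, nbhs x O & forall z, O z -> forall a : R, (a%:E < Psi z)%E ->
      exists2 V, nbhs z V & forall w, V w -> (a%:E < Psi w)%E) /\
  limiting_subdiff Psi x = frechet_subdiff Psi x /\
  horizon_subdiff Psi x = horizon_cone (frechet_subdiff Psi x).

Definition local_param {R : realType} {n p : nat} (M : set 'cV[R]_n)
  (phi : 'cV[R]_p -> 'cV[R]_n) (ystar : 'cV[R]_p) (xstar : 'cV[R]_n) : Prop :=
  C2_on setT phi /\ (forall y, M (phi y)) /\ phi ystar = xstar /\
  (forall a : 'cV[R]_p, jacobian phi ystar *m a = 0 -> a = 0) /\
  exists2 W, nbhs ystar W & exists2 O, nbhs xstar O &
    {in W &, injective phi} /\ phi @` W = M `&` O.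

(* normal space to M at phi y* : orthogonal complement of the tangent space
   = range of the derivative of phi at y* *)
Definition normal_space {R : realType} {n p : nat}
  (phi : 'cV[R]_p -> 'cV[R]_n) (ystar : 'cV[R]_p) : set 'cV[R]_n :=
  [set v | forall j, dotv v (partial phi j ystar) = 0].

Definition affspan {R : realType} {n : nat} (S : set 'cV[R]_n) : set 'cV[R]_n :=
  [set x | exists (k : nat) (w : 'I_k -> R) (s : 'I_k -> 'cV[R]_n),
      \sum_(i < k) w i = 1 /\ (forall i, S (s i)) /\ x = \sum_(i < k) w i *: s i].

Definition partly_smooth {R : realType} {n p : nat} (Psi : 'cV[R]_n -> \bar R)
  (M : set 'cV[R]_n) (phi : 'cV[R]_p -> 'cV[R]_n) (ystar : 'cV[R]_p)
  (xstar : 'cV[R]_n) : Prop :=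
  subdiff Psi xstar !=set0 /\
  (* (i) M is a C^2 manifold near x* (via phi) and Psi|M is C^2 near x* *)
  local_param M phi ystar xstar /\
  (exists2 W, nbhs ystar W &
     (forall y, W y -> Psi (phi y) \is a fin_num) /\
     C2_on (interior W) (fun y => (fine (Psi (phi y)) : R^o))) /\
  (* (ii) affine span of the subdifferential is a translate of the normal space *)
  (exists v0, affspan (subdiff Psi xstar) =
              [set v0 + w | w in normal_space phi ystar]) /\
  (* (iii) continuity of the subdifferential at x* relative to M *)
  (forall (xk vk : nat -> 'cV[R]_n) v, (forall k, M (xk k)) ->
     xk @ \oo --> xstar -> (forall k, subdiff Psi (xk k) (vk k)) ->
     vk @ \oo --> v -> subdiff Psi xstar v) /\
  (forall v (xk : nat -> 'cV[R]_n), subdiff Psi xstar v ->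
     (forall k, M (xk k)) -> xk @ \oo --> xstar ->
     exists vk : nat -> 'cV[R]_n,
       (\forall k \near \oo, subdiff Psi (xk k) (vk k)) /\ vk @ \oo --> v) /\
  (* (iv) regularity with nonempty subdifferential at points of M near x* *)
  (exists2 eps : R, 0 < eps & forall x, M x -> enorm (x - xstar) < eps ->
      sregular Psi x /\ subdiff Psi x !=set0).

(* Main.v *)
Require Import Defs.
From HB Require Import structures.
From mathcomp Require Import all_boot all_order all_algebra.
From mathcomp Require Import all_classical all_reals all_analysis.
From mathcomp Require Import lra.
Import Order.TTheory GRing.Theory Num.Theory.
Import numFieldNormedType.Exports.
Local Open Scope classical_set_scope.
Local Open Scope ring_scope.

Section Alg.
Variable (R : realType) (p : nat).
Implicit Types u v w : 'cV[R]_p.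

Lemma dotvC u v : dotv u v = dotv v u.
Proof. by apply: eq_bigr => i _; rewrite mulrC. Qed.

Lemma dotvDr u v w : dotv u (v + w) = dotv u v + dotv u w.
Proof. by rewrite /dotv -big_split; apply: eq_bigr => i _; rewrite mxE mulrDr. Qed.

Lemma dotvZr (a : R) u v : dotv u (a *: v) = a * dotv u v.
Proof. by rewrite /dotv mulr_sumr; apply: eq_bigr => i _; rewrite mxE mulrCA. Qed.

Lemma dotvNr u v : dotv u (- v) = - dotv u v.
Proof. by rewrite /dotv -sumrN; apply: eq_bigr => i _; rewrite mxE mulrN. Qed.

Lemma dotvDl u v w : dotv (v + w) u = dotv v u + dotv w u.
Proof. by rewrite dotvC dotvDr !(dotvC u). Qed.

Lemma dotvZl (a : R) u v : dotv (a *: v) u = a * dotv v u.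
Proof. by rewrite dotvC dotvZr dotvC. Qed.

Lemma dotvNl u v : dotv (- v) u = - dotv v u.
Proof. by rewrite dotvC dotvNr dotvC. Qed.

Lemma dotvv_ge0 u : 0 <= dotv u u.
Proof. by apply: sumr_ge0 => i _; rewrite -expr2 sqr_ge0. Qed.

Lemma dotvv_eq0 u : dotv u u = 0 -> u = 0.
Proof.
move=> /eqP; rewrite psumr_eq0; last by move=> i _; rewrite -expr2 sqr_ge0.
move=> /allP H; apply/matrixP => i j; rewrite (ord1 j) mxE.
by have := H i (mem_index_enum _); rewrite -expr2 sqrf_eq0 => /eqP.
Qed.

Lemma enorm_ge0 u : 0 <= enorm u.
Proof. exact: sqrtr_ge0. Qed.

Lemma enorm_sq u : enorm u ^+ 2 = dotv u u.
Proof. by rewrite sqr_sqrtr // dotvv_ge0. Qed.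

Lemma enorm_eq0 u : enorm u = 0 -> u = 0.
Proof. by move=> h; apply: dotvv_eq0; rewrite -enorm_sq h expr0n. Qed.

Lemma enormZ (a : R) u : enorm (a *: u) = `|a| * enorm u.
Proof.
rewrite /enorm dotvZl dotvZr mulrA -expr2 sqrtrM ?sqr_ge0 //.
by rewrite sqrtr_sqr.
Qed.

Lemma enormN u : enorm (- u) = enorm u.
Proof. by rewrite -scaleN1r enormZ normrN normr1 mul1r. Qed.

Lemma CS u v : dotv u v <= enorm u * enorm v.
Proof.
have [a0|] := eqVneq (enorm u) 0.
  rewrite (enorm_eq0 _ a0) /dotv big1 => [|i _]; [by rewrite mulr_ge0 ?enorm_ge0|by rewrite mxE mul0r].
have [b0|] := eqVneq (enorm v) 0.
  rewrite (enorm_eq0 _ b0) /dotv big1 => [|i _]; [by rewrite mulr_ge0 ?enorm_ge0|by rewrite mxE mulr0].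
move=> nb na.
have ha : 0 < enorm u by rewrite lt_def na enorm_ge0.
have hb : 0 < enorm v by rewrite lt_def nb enorm_ge0.
have := dotvv_ge0 (enorm v *: u - enorm u *: v).
rewrite !(dotvDl, dotvDr, dotvNl, dotvNr, dotvZl, dotvZr) -!enorm_sq (dotvC v u).
set a := enorm u; set b := enorm v; set x := dotv u v => H.
have hab : 0 < a * b by rewrite mulr_gt0.
rewrite -(ler_pM2l hab); nra.
Qed.

Lemma enormD u v : enorm (u + v) <= enorm u + enorm v.
Proof.
rewrite -(ler_pXn2r (n:=2)) //; last by rewrite nnegrE addr_ge0 // enorm_ge0.
  rewrite enorm_sq !(dotvDl, dotvDr) -!enorm_sq (dotvC v u).
  have := CS u v; set a := enorm u; set b := enorm v; nra.
by rewrite nnegrE enorm_ge0.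
Qed.

Lemma main_ineq (V : 'M[R]_p) (mu A B : R) (q g dy : 'cV[R]_p) :
  psd V -> 0 < mu ->
  enorm ((V + mu%:M) *m q + g) <= A -> enorm (g - V *m dy) <= B ->
  enorm q <= 2 * enorm dy + mu^-1 * B + mu^-1 * A.
Proof.
move=> psdV mu0 hA hB.
set w := q + dy.
have eHw : (V + mu%:M) *m w = ((V + mu%:M) *m q + g) - (g - V *m dy) + mu *: dy.
  rewrite /w mulmxDr.
  have -> : (V + mu%:M) *m dy = V *m dy + mu *: dy by rewrite mulmxDl mul_scalar_mx.
  rewrite opprB addrA; congr (_ + _).
  by rewrite -addrA [g + _]addrC addrNK.
have h1 : enorm ((V + mu%:M) *m w) <= A + B + mu * enorm dy.
  rewrite eHw; apply: (le_trans (enormD _ _)); rewrite enormZ (ger0_norm (ltW mu0)).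
  rewrite lerD2r; apply: (le_trans (enormD _ _)); rewrite enormN; exact: lerD.
have h2 : mu * enorm w <= enorm ((V + mu%:M) *m w).
  have := CS w ((V + mu%:M) *m w).
  rewrite mulmxDl mul_scalar_mx dotvDr dotvZr -enorm_sq.
  have := psdV w; have := enorm_ge0 w; have := enorm_ge0 ((V *m w) + mu *: w).
  set a := enorm w; set b := enorm _; move=> hb ha hp H.
  have [a0|ap] := eqVneq a 0; first by rewrite a0 mulr0.
  have ha' : 0 < a by rewrite lt_def ap ha.
  rewrite -(ler_pM2l ha'); nra.
have h3 : enorm q <= enorm w + enorm dy.
  have -> : q = w + - dy by rewrite /w addrK.
  by apply: (le_trans (enormD _ _)); rewrite enormN.
have h4 : mu * enorm w <= A + B + mu * enorm dy := le_trans h2 h1.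
have h5 : enorm w <= mu^-1 * (A + B) + enorm dy.
  by rewrite -(ler_pM2l mu0) mulrDr mulrA mulfV ?gt_eqF // mul1r.
rewrite mulrDr in h5; lra.
Qed.
End Alg.

Section Entries.
Variables (R : realType) (n : nat).
Lemma entry_le (v : 'cV[R]_n) i : `|v i 0| <= `|v|.
Proof. by rewrite [leRHS]/Num.Def.normr /= mx_normrE; exact: (le_bigmax _ _ (i, 0)). Qed.

Lemma le_entries (v : 'cV[R]_n) c : 0 <= c -> (forall i, `|v i 0| <= c) -> `|v| <= c.
Proof.
move=> c0 H; rewrite /Num.Def.normr /= mx_normrE (bigmax_le _ c0) //= => -[i j] _.
by rewrite (ord1 j); exact: H.
Qed.
End Entries.

Section Frechet.
Variables (R : realType) (n : nat) (f : 'cV[R]_n -> R^o).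
Hypothesis fd : forall z j, derivable f z (ebasis j).

Definition trunc (k : nat) (w : 'cV[R]_n) : 'cV[R]_n :=
  \col_(j < n) (if (j < k)%N then w j 0 else 0).

Lemma trunc0 w : trunc 0 w = 0.
Proof. by apply/matrixP => i j; rewrite !mxE. Qed.

Lemma truncn w : trunc n w = w.
Proof. by apply/matrixP => i j; rewrite (ord1 j) !mxE ltn_ord. Qed.

Lemma truncS w (i : 'I_n) : trunc i.+1 w = trunc i w + w i 0 *: ebasis i.
Proof.
apply/matrixP => j k; rewrite (ord1 k) !mxE /= eqxx andbT.
case: (ltngtP j i) => [ji|ij|/val_inj ->].
- have -> : (j == i) = false by apply: ltn_eqF.
  by rewrite ltnS (ltnW ji) mulr0 addr0.
- have -> : (j == i) = false by apply: gtn_eqF.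
  by rewrite ltnNge ij /= mulr0 addr0.
- by rewrite ltnSn eqxx mulr1 add0r.
Qed.

Lemma deriv_line (z : 'cV[R]_n) (i : 'I_n) (t : R) :
  is_derive t 1 (fun s : R => (f (z + s *: ebasis i) : R)) (partial f i (z + t *: ebasis i)).
Proof.
set g := fun s : R => _.
have E : (fun h : R => h^-1 *: ((g \o shift t) (h *: 1) - g t)) =
         (fun h : R => h^-1 *: ((f \o shift (z + t *: ebasis i)) (h *: ebasis i)
                               - f (z + t *: ebasis i))).
  apply/funext => h; rewrite /g /=; congr (_ *: (f _ - _)).
  by rewrite [h%:A]mulr1 scalerDl addrCA.
constructor; first by rewrite /derivable E; exact: fd.
by rewrite /derive E.
Qed.

Lemma step (z : 'cV[R]_n) (i : 'I_n) (s : R) : exists2 th : R, `|th| <= `|s| &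
  f (z + s *: ebasis i) - f z = s * partial f i (z + th *: ebasis i).
Proof.
set g := fun s : R => (f (z + s *: ebasis i) : R).
have gc : forall a b : R, {within `[a, b], continuous g}.
  move=> a b; apply: derivable_within_continuous => t _.
  by have [] := deriv_line z i t.
have g0 : g 0 = f z by rewrite /g scale0r addr0.
have [s0|s0] := leP 0 s.
  have [c] := MVT_segment s0 (fun t _ => deriv_line z i t) (gc 0 s).
  rewrite in_itv /= => /andP[c0 cs]; rewrite scale0r addr0 subr0 => ->.
  by exists c; [rewrite !ger0_norm // (le_trans c0 cs)| rewrite mulrC].
have [c] := MVT_segment (ltW s0) (fun t _ => deriv_line z i t) (gc s 0).
rewrite in_itv /= => /andP[sc c0]; rewrite scale0r addr0 sub0r => H.
exists c; first by rewrite !ler0_norm ?lerN2 // ltW.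
by rewrite -[LHS]opprB H mulrN opprK mulrC.
Qed.

Lemma frechet_bound (x : 'cV[R]_n) eps' (delta : R) :
  0 <= eps' ->
  (forall z, `|z - x| < delta -> forall i, `|partial f i z - partial f i x| <= eps') ->
  forall w, `|w| < delta ->
  `|f (x + w) - f x - dotv (grad f x) w| <= n%:R * eps' * `|w|.
Proof.
move=> e0 Hd w wd.
set u := fun k : nat => f (x + trunc k w).
have tele : f (x + w) - f x = \sum_(i < n) (u i.+1 - u i).
  rewrite -(big_mkord xpredT (fun i => u i.+1 - u i)) telescope_sumr //.
  by rewrite /u truncn trunc0 addr0.
have dot : dotv (grad f x) w = \sum_(i < n) w i 0 * partial f i x.
  by apply: eq_bigr => i _; rewrite mxE mulrC.
rewrite tele dot -sumrB.
apply: (le_trans (ler_norm_sum _ _ _)).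
have -> : n%:R * eps' * `|w| = \sum_(i < n) (eps' * `|w|).
  by rewrite sumr_const card_ord -mulrA mulr_natl.
apply: ler_sum => i _.
rewrite /u truncS addrA.
have [th thle ->] := step (x + trunc i w) i (w i 0).
rewrite -mulrBr normrM mulrC; apply: ler_pM.
- exact: normr_ge0.
- exact: normr_ge0.
- apply: Hd; rewrite addrAC [x + _ - x]addrC addKr.
  apply: le_lt_trans wd; apply: le_entries => [|j]; first exact: normr_ge0.
  rewrite !mxE eqxx andbT.
  case: eqP => [ji|_].
  + by rewrite ji ltnn add0r mulr1 (le_trans thle) ?entry_le.
  + rewrite mulr0 addr0; case: ifP => _; [exact: entry_le | by rewrite normr0 normr_ge0].
- exact: entry_le.
Qed.


Lemma frechet_near (x : 'cV[R]_n) :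
  (forall j, {for x, continuous (partial f j)}) ->
  forall eps : R, 0 < eps -> exists2 delta : R, 0 < delta &
  forall w, `|w| < delta -> `|f (x + w) - f x - dotv (grad f x) w| <= eps * `|w|.
Proof.
move=> hc eps eps0.
have n10 : 0 < n%:R + 1 :> R by rewrite ltr_wpDl.
set e' := eps / (n%:R + 1).
have e'0 : 0 < e' by rewrite divr_gt0.
have H : \forall z \near x, forall i, `|partial f i x - partial f i z| <= e'.
  exact: (filter_forall _ (fun i => (cvgrPdist_le _ _).1 (hc i) e' e'0)).
move/nbhs_normP: H => [d /= d0 Hd].
exists d => // w wd.
apply: (le_trans (frechet_bound x e' d (ltW e'0) _ w wd)).
  move=> z zd i; rewrite distrC; apply: Hd; by rewrite /= distrC.
apply: ler_wpM2r; first exact: normr_ge0.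
rewrite /e' mulrA ler_pdivrMr //; nra.
Qed.

End Frechet.

Section Chain.
Variables (R : realType) (n p : nat).

Lemma dotv_bound (G u : 'cV[R]_n) : `|dotv G u| <= (\sum_i `|G i 0|) * `|u|.
Proof.
rewrite mulr_suml; apply: (le_trans (ler_norm_sum _ _ _)); apply: ler_sum => i _.
by rewrite normrM ler_wpM2l ?normr_ge0 // entry_le.
Qed.

Lemma chain (f : 'cV[R]_n -> R^o) (phi : 'cV[R]_p -> 'cV[R]_n) (y e : 'cV[R]_p) :
  (forall z j, derivable f z (ebasis j)) ->
  (forall j, {for phi y, continuous (partial f j)}) ->
  derivable phi y e ->
  is_derive y e (f \o phi) (dotv (grad f (phi y)) ('D_e phi y)).
Proof.
move=> fd hc dphi.
set G := grad f (phi y); set D := 'D_e phi y.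
set Q := fun h : R => h^-1 *: (phi (h *: e + y) - phi y).
have hQ : Q @ 0^' --> D := dphi.
set K := \sum_i `|G i 0|.
have K0 : 0 <= K by apply: sumr_ge0 => i _; exact: normr_ge0.
suff hq : (fun h : R => h^-1 *: ((f \o phi \o shift y) (h *: e) - (f \o phi) y)) @ 0^'
           --> dotv G D.
  by constructor; [apply/cvgP: hq | exact: (cvg_lim _ hq)].
apply/cvgrPdist_le => eps eps0.
have D1 : 0 < `|D| + 1 by rewrite ltr_wpDl.
set e1 := Num.min 1 (eps / 2 / (K + 1)).
have e10 : 0 < e1 by rewrite lt_min ltr01 !divr_gt0 // ltr_wpDl.
have e11 : e1 <= 1 by rewrite /e1 ge_min lexx.
have e12 : e1 <= eps / 2 / (K + 1) by rewrite /e1 ge_min lexx orbT.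
have e20 : 0 < eps / 2 / (`|D| + 1) by rewrite !divr_gt0.
have [d d0 Hd] := @frechet_near _ _ f fd (phi y) hc _ e20.
have dD : 0 < d / (`|D| + 1) by rewrite divr_gt0.
near=> h.
have hQh : `|D - Q h| <= e1 by near: h; exact: (cvgrPdist_le _ _).1 hQ e1 e10.
have hs : `|h| < d / (`|D| + 1) by near: h; exact: dnbhs0_lt.
have h0 : h != 0 by near: h; exact: nbhs_dnbhs_neq.
set Del := phi (h *: e + y) - phi y.
have eDel : Del = h *: Q h by rewrite /Q scalerA mulfV // scale1r.
have Qb : `|Q h| <= `|D| + 1.
  have -> : Q h = D - (D - Q h) by rewrite opprB addrC subrK.
  apply: (le_trans (ler_normB _ _)); rewrite lerD2l.
  exact: (le_trans hQh e11).
have Dd : `|Del| < d.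
  rewrite eDel normrZ; apply: (le_lt_trans (ler_wpM2l (normr_ge0 _) Qb)).
  by rewrite -ltr_pdivlMr.
have eD : phi y + Del = phi (h *: e + y) by rewrite /Del addrC subrK.
have := Hd _ Dd; rewrite eD => Hr.
set r := f (phi (h *: e + y)) - f (phi y) - dotv G Del.
have eq1 : h^-1 *: (f (phi (h *: e + y)) - f (phi y)) = h^-1 * r + dotv G (Q h).
  by rewrite /r /Q dotvZr -/Del -mulrDr subrK.
rewrite /= eq1.
have -> : dotv G D - (h^-1 * r + dotv G (Q h)) = dotv G (D - Q h) - h^-1 * r.
  by rewrite dotvDr dotvNr opprD addrA addrAC.
apply: (le_trans (ler_normB _ _)); rewrite [X in _ <= X](splitr eps).
have e2 : 0 < eps / 2 by rewrite divr_gt0.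
apply: lerD.
  apply: (le_trans (dotv_bound _ _)).
  apply: (le_trans (ler_wpM2l K0 (le_trans hQh e12))).
  rewrite mulrA ler_pdivrMr ?ltr_wpDl //; nra.
set c := eps / 2 / (`|D| + 1) in Hr e20 *.
have cD : c * (`|D| + 1) = eps / 2 by rewrite /c divfK // gt_eqF.
have hp : 0 < `|h| by rewrite normr_gt0.
rewrite normrM normfV -(ler_pM2l hp) mulrA mulfV ?gt_eqF // mul1r.
apply: (le_trans Hr); rewrite eDel normrZ -cD mulrCA.
apply: ler_wpM2l; first exact: normr_ge0.
by apply: ler_wpM2l => //; exact: ltW.
Unshelve. all: by end_near.
Qed.
End Chain.

Section MinZero.
Variable R : realType.

Lemma dnbhs_wit (P : R -> Prop) : (\forall h \near (0:R)^', P h) ->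
  (exists h : R, h < 0 /\ P h) /\ (exists h : R, 0 < h /\ P h).
Proof.
move=> /nbhs_norm0P [d /= d0 Hd].
have d2 : 0 < d / 2 by rewrite divr_gt0.
have d2d : d / 2 < d by rewrite ltr_pdivrMr // ltr_pMr // ltr1n.
split.
  exists (- (d / 2)); split; first by rewrite oppr_lt0.
  apply: Hd; last by rewrite oppr_eq0 gt_eqF.
  by rewrite /= normrN gtr0_norm.
exists (d / 2); split => //.
apply: Hd; last by rewrite gt_eqF.
by rewrite /= gtr0_norm.
Qed.

Lemma min_zero (k : R -> R) (l : R) : (\forall h \near 0, 0 <= k h) ->
  (fun h => h^-1 * k h) @ 0^' --> l -> l = 0.
Proof.
move=> kge hk.
have kge' : \forall h \near (0:R)^', 0 <= k h := nbhs_dnbhs kge.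
have [l0|l0|//] := ltgtP l 0.
- have H : \forall h \near (0:R)^', h^-1 * k h < 0.
    have H0 : \forall t \near (0:R)^', `|l - t^-1 * k t| < - l.
      by apply: ((cvgrPdist_lt _ _).1 hk); rewrite oppr_gt0.
    apply: filterS H0 => h; rewrite ltr_norml => /andP[+ _]; lra.
  have [_ [h [h0 [Hh1 Hh2]]]] := dnbhs_wit _ (filterI H kge').
  have : 0 <= h^-1 * k h by rewrite mulr_ge0 // invr_ge0 ltW.
  by rewrite leNgt Hh1.
- have H : \forall h \near (0:R)^', 0 < h^-1 * k h.
    have H0 : \forall t \near (0:R)^', `|l - t^-1 * k t| < l.
      exact: ((cvgrPdist_lt _ _).1 hk).
    apply: filterS H0 => h; rewrite ltr_norml => /andP[_]; lra.
  have [[h [h0 [Hh1 Hh2]]] _] := dnbhs_wit _ (filterI H kge').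
  have : h^-1 * k h <= 0 by rewrite mulr_le0_ge0 // invr_le0 ltW.
  by rewrite leNgt Hh1.
Qed.
End MinZero.

Section GradZero.
Variables (R : realType) (n p : nat).

Lemma grad_zero (f : 'cV[R]_n -> R^o) (Psi : 'cV[R]_n -> \bar R)
  (phi : 'cV[R]_p -> 'cV[R]_n) (ystar : 'cV[R]_p) (W : set 'cV[R]_p) (v : 'cV[R]_n) :
  (forall z j, derivable f z (ebasis j)) ->
  (forall j, {for phi ystar, continuous (partial f j)}) ->
  (forall j, derivable phi ystar (ebasis j)) ->
  nbhs ystar W -> (forall y, W y -> Psi (phi y) \is a fin_num) ->
  (forall j, derivable (fun y => (fine (Psi (phi y)) : R^o)) ystar (ebasis j)) ->
  subdiff Psi (phi ystar) v -> grad f (phi ystar) + v = 0 ->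
  grad (fun y => (f (phi y) + fine (Psi (phi y)) : R^o)) ystar = 0.
Proof.
move=> fd hc dphi hW Wfin dB [Psifin Hsub] Gv.
apply/matrixP => i j; rewrite (ord1 j) !mxE /partial.
set e := (ebasis i : 'cV[R]_p).
set B := fun y => (fine (Psi (phi y)) : R^o).
set G := grad f (phi ystar).
set D := 'D_e phi ystar.
have hA := @chain _ _ _ f phi ystar e fd hc (dphi i).
have -> : (fun y => (f (phi y) + fine (Psi (phi y)) : R^o)) = (f \o phi) + B.
  by apply/funext.
rewrite deriveD; [|by case: hA|exact: dB].
rewrite (@derive_val _ _ _ _ _ _ _ hA) -/e -/D -/G.
have vG : v = - G by apply/eqP; rewrite -addr_eq0 addrC Gv.
set k := fun h : R => B (h *: e + ystar) - B ystar + dotv G (phi (h *: e + ystar) - phi ystar).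
apply: (@min_zero _ k).
  move/nbhs_normP: hW => [d /= d0 Hd].
  have e1 : 0 < `|e| + 1 by rewrite ltr_wpDl.
  apply/nbhs_norm0P; exists (d / (`|e| + 1)); first by rewrite /= divr_gt0.
  move=> h /= hd.
  have Wz : W (h *: e + ystar).
    apply: Hd; rewrite /= opprD addrCA subrr addr0 normrN normrZ.
    apply: (le_lt_trans (ler_wpM2l (normr_ge0 _) (_ : `|e| <= `|e| + 1))).
      by rewrite lerDl.
    by rewrite -ltr_pdivlMr.
  have := Hsub (phi (h *: e + ystar)).
  rewrite -(fineK Psifin) -(fineK (Wfin _ Wz)) -EFinD lee_fin.
  rewrite /k /B vG dotvNl; lra.
set qB := fun h : R => h^-1 *: ((B \o shift ystar) (h *: e) - B ystar).
set Q := fun h : R => h^-1 *: (phi (h *: e + ystar) - phi ystar).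
have -> : (fun h => h^-1 * k h) = (fun h => qB h + dotv G (Q h)).
  apply/funext => h; rewrite /k /qB /Q dotvZr /= mulrDr.
  by rewrite [in RHS]/GRing.scale /=.
rewrite addrC; apply: cvgD; first exact: (dB i).
have hQ : Q @ 0^' --> D := dphi i.
set K := \sum_i `|G i 0|.
have K0 : 0 <= K by apply: sumr_ge0 => l _; exact: normr_ge0.
apply/cvgrPdist_le => eps eps0.
have e0 : 0 < eps / (K + 1) by rewrite divr_gt0 // ltr_wpDl.
have H0 : \forall h \near (0:R)^', `|D - Q h| <= eps / (K + 1).
  exact: ((cvgrPdist_le _ _).1 hQ).
near=> h.
have hh : `|D - Q h| <= eps / (K + 1) by near: h; exact: H0.
rewrite -dotvNr -dotvDr; apply: (le_trans (@dotv_bound R n G (D - Q h))).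
apply: (le_trans (ler_wpM2l K0 hh)).
rewrite mulrA ler_pdivrMr ?ltr_wpDl //; nra.
Unshelve. all: by end_near.
Qed.
End GradZero.

Theorem lemma4 (R : realType) (n p : nat)
  (f : 'cV[R]_n -> R^o) (Psi : 'cV[R]_n -> \bar R)
  (M : set 'cV[R]_n) (phi : 'cV[R]_p -> 'cV[R]_n)
  (xstar : 'cV[R]_n) (ystar : 'cV[R]_p)
  (U : set 'cV[R]_p) (c rho : R) :
  (* standing assumptions *)
  C1_on setT f ->
  (exists L : R, forall x y, enorm (grad f x - grad f y) <= L * enorm (x - y)) ->
  eproper Psi -> econvex Psi -> lower_semicontinuous Psi ->
  (* x* is stationary: 0 \in grad f(x* ) + \partial Psi(x* ) *)
  (exists2 v, subdiff Psi xstar v & grad f xstar + v = 0) ->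
  partly_smooth Psi M phi ystar xstar ->
  let Fphi := fun y => (f (phi y) + fine (Psi (phi y)) : R^o) in
  nbhs ystar U ->
  (forall y, U y -> forall V, clarke_jac (grad Fphi) y V -> psd V) ->
  strongly_semismooth (grad Fphi) ystar ->
  0 < c -> 0 < rho <= 1 ->
  exists C : R, exists2 delta : R, 0 < delta &
    forall y, U y -> enorm (y - ystar) < delta ->
    forall V, clarke_jac (grad Fphi) y V ->
    let g := grad Fphi y in
    let mu := c * enorm g `^ rho in
    let H := V + mu%:M in
    let d := enorm (y - ystar) in
    g != 0 ->
    forall q : 'cV[R]_p,
      enorm (H *m q + g) <= 10^-1 * Num.min (enorm g) (enorm g `^ (1 + rho)) ->
      enorm q <= 2 * d + mu^-1 * (C * d ^+ 2)
                 + 10^-1 * mu^-1 * enorm g `^ (1 + rho).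

Proof.
move=> [_ hf] _ _ _ _ [v hv Gv] hps Fphi hU hpsd [_ [Cs [ds ds0 Hs]]] c0 rho0.
have fd : forall z j, derivable f z (ebasis j) by move=> z j; case: (hf z I j).
have fc : forall z j, {for z, continuous (partial f j)} by move=> z j; case: (hf z I j).
case: hps => _ [[[[_ hphi] _] [_ [exs _]]] [[W hW [Wfin [[_ hB] _]]] _]].
have dphi : forall j, derivable phi ystar (ebasis j) by move=> j; case: (hphi ystar I j).
have dB : forall j, derivable (fun y => (fine (Psi (phi y)) : R^o)) ystar (ebasis j).
  by move=> j; case: (hB ystar hW j).
rewrite -exs in hv Gv.
have g0 : grad Fphi ystar = 0.
  exact: (@grad_zero R n p f Psi phi ystar W v fd (fc (phi ystar)) dphi hW Wfin dB hv Gv).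
exists Cs; exists ds => // y Uy yd V hV g mu H d gn0 q hq.
have ey : ystar + (y - ystar) = y by rewrite addrC subrK.
have := Hs (y - ystar) yd V; rewrite ey g0 subr0 => /(_ hV) hB'.
have gpos : 0 < enorm g.
  rewrite lt_def enorm_ge0 andbT; apply/negP => /eqP/enorm_eq0 h0.
  by move/eqP: gn0; apply.
have mu0 : 0 < mu by rewrite mulr_gt0 // powR_gt0.
have := @main_ineq R p V mu _ _ q g (y - ystar) (hpsd y Uy V hV) mu0 hq hB'.
rewrite -/d => h1; apply: (le_trans h1); rewrite lerD2l.
have hm : Num.min (enorm g) (enorm g `^ (1 + rho)) <= enorm g `^ (1 + rho).
  by rewrite ge_min lexx orbT.
rewrite mulrA [mu^-1 * _]mulrC; apply: ler_wpM2l => //.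
by rewrite mulr_ge0 // invr_ge0 ?ltW.
Qed.
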